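(* Consider the private information delivery (PID) problem with $K$ messages, $N$ servers and $M$ messages stored per server, where $1\le M\le K$. If $K/M$ is an integer and $N\ge K/M$, then the capacity is $C=M/K$.
   Context: The PID problem with parameters $(K,N,M)$: There are $K$ independent messages $W_1,\dots,W_K$, each consisting of $L$ i.i.d. uniform symbols from a finite field $\mathbb{F}_p$, so that (in $p$-ary units) $H(W_k)=L$ for all $k$ and $H(W_1,\dots,W_K)=\sum_k H(W_k)$. There are $N$ servers; server $n$ stores $S_n=\{W_k : k\in\mathcal{S}_n\}$ for some $\mathcal{S}_n\subset\{1,\dots,K\}$ with $|\mathcal{S}_n|=M$ (a design choice). The servers share a common random variable $Z$ independent of the messages. For each $k\in\{1,\dots,K\}$, server $n$ sends an answer $A_n^{[k]}$ that is a deterministic function of $(S_n,Z)$ and consists of $D_n$ symbols of $\mathbb{F}_p$ ($D_n$ independent of $k$). Correctness: $H(W_k\mid A_1^{[k]},\dots,A_N^{[k]})=0$ for all $k$. Privacy: for all $k$, $(A_1^{[1]},\dots,A_N^{[1]},W_1)$ and $(A_1^{[k]},\dots,A_N^{[k]},W_k)$ are identically distributed. The rate is $R=L/\sum_n D_n$; a rate is achievable if some scheme (choice of $L$, $p$, storage sets, $Z$, answer functions) satisfying these constraints has rate at least $R$; the capacity $C$ is the supremum of achievable rates over all storage designs and schemes. *)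

(* Defs.v *)
From HB Require Import structures.
From mathcomp Require Import all_boot all_order all_algebra.
From mathcomp Require Import all_classical all_reals.
From mathcomp Require Import exp Rstruct.
Set Implicit Arguments. Unset Strict Implicit. Unset Printing Implicit Defensive.
Import Order.TTheory GRing.Theory Num.Theory.
Local Open Scope ring_scope.

Notation Real := Rdefinitions.R.

Definition evprob (Om : finType) (P : Om -> Real) (E : pred Om) : Real :=
  \sum_(o in Om | E o) P o.

(* conditional entropy H(X | Y) = E[ - ln P(X | Y) ] (in nats; the unit is
   irrelevant for the statement H = 0). Zero-probability outcomes contribute 0. *)
Definition condH (Om : finType) (P : Om -> Real) (T1 T2 : eqType)
  (X : Om -> T1) (Y : Om -> T2) : Real :=
  \sum_(o : Om) P o *
     - ln (evprob P (fun o' => (X o' == X o) && (Y o' == Y o)) /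
           evprob P (fun o' => Y o' == Y o)).

Record pid_scheme (K N : nat) := PidScheme {
  fp : nat;
  fp_prime : prime fp;
  len : nat;                                  (* message length L *)
  ZT : finType;                               (* alphabet of common randomness Z *)
  PZ : ZT -> Real;
  dl : 'I_N -> nat;                           (* answer lengths D_n *)
  store : 'I_N -> {set 'I_K};
  (* answer A_n^{[k]} as a function of all messages and Z; see [pid_valid]
     for the requirement that it only depends on (S_n, Z) *)
  answer : 'I_K -> forall n : 'I_N,
             {ffun 'I_K -> 'rV['F_fp]_len} -> ZT -> (dl n).-tuple 'F_fp
}.

Arguments fp {K N}. Arguments len {K N}. Arguments ZT {K N}.
Arguments PZ {K N} p _. Arguments dl {K N} p _. Arguments store {K N} p _.
Arguments answer {K N} p _ _ _ _.

Section Scheme.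
Variables (K N M : nat) (s : pid_scheme K N).

Definition msgs := {ffun 'I_K -> 'rV['F_(fp s)]_(len s)}.

(* sample space: (W_1..W_K, Z), messages i.i.d. uniform and independent of Z *)
Definition Omega := (msgs * ZT s)%type.

Definition prob (o : Omega) : Real := PZ s o.2 / #|{: msgs}|%:R.

Definition Wk (k : 'I_K) (o : Omega) : 'rV['F_(fp s)]_(len s) := o.1 k.

Definition Ak (k : 'I_K) (o : Omega) : seq (seq 'F_(fp s)) :=
  [seq val (answer s k n o.1 o.2) | n <- enum 'I_N].

Definition pid_valid : Prop :=
  (forall z, 0 <= PZ s z) /\ (\sum_z PZ s z = 1) /\
  (forall n, #|store s n| = M) /\
  (forall k n (w w' : msgs) z, (forall i, i \in store s n -> w i = w' i) ->
      answer s k n w z = answer s k n w' z) /\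
  (forall k, condH prob (Wk k) (Ak k) = 0) /\
  (forall k k' a x,
      evprob prob (fun o => (Ak k o == a) && (Wk k o == x)) =
      evprob prob (fun o => (Ak k' o == a) && (Wk k' o == x))).

Definition rate : Real := (len s)%:R / (\sum_n dl s n)%:R.

End Scheme.

Definition achievable (K N M : nat) (r : Real) : Prop :=
  exists s : pid_scheme K N, pid_valid M s /\ r <= rate s.

Definition capacity (K N M : nat) : Real :=
  sup [set r : Real | achievable K N M r]%classic.

(* Main.v *)
Require Import Defs.
From HB Require Import structures.
From mathcomp Require Import all_boot all_order all_algebra.
From mathcomp Require Import all_classical all_reals.
From mathcomp Require Import exp Rstruct.
Import Order.TTheory GRing.Theory Num.Theory.
Local Open Scope ring_scope.

Lemma condH_det (Om : finType) (P : Om -> Rdefinitions.R) (T1 T2 : eqType)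
  (X : Om -> T1) (Y : Om -> T2) (f : T2 -> T1) :
  (forall o, X o = f (Y o)) -> condH P X Y = 0.
Proof.
move=> hf; rewrite /condH big1 // => o _.
have -> : evprob P (fun o' => (X o' == X o) && (Y o' == Y o)) =
          evprob P (fun o' => Y o' == Y o).
  rewrite /evprob; apply: eq_bigl => o'.
  case: (Y o' =P Y o) => [e|_]; last by rewrite andbF.
  by rewrite andbT !hf e eqxx.
set r := evprob _ _.
have [->|r0] := eqVneq r 0; first by rewrite invr0 mulr0 ln0 // oppr0 mulr0.
by rewrite divff // ln1 oppr0 mulr0.
Qed.

Lemma condH0_det (Om : finType) (P : Om -> Rdefinitions.R) (T1 T2 : eqType)
  (X : Om -> T1) (Y : Om -> T2) :
  (forall o, 0 <= P o) -> condH P X Y = 0 ->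
  forall o o', 0 < P o -> 0 < P o' -> Y o = Y o' -> X o = X o'.
Proof.
move=> P0 H o o' Po Po' eY.
pose a o := evprob P (fun o' => (X o' == X o) && (Y o' == Y o)).
pose b o := evprob P (fun o' => Y o' == Y o).
have a0 o1 : 0 <= a o1 by apply: sumr_ge0.
have ab o1 : a o1 <= b o1.
  have -> : a o1 = \sum_(o' in Om | (Y o' == Y o1) && (X o' == X o1)) P o'.
    by rewrite /a /evprob; apply: eq_bigl => i; rewrite [(X i == _) && _]andbC.
  rewrite /b /evprob [leRHS](bigID (fun o' => X o' == X o1)) /=.
  by rewrite lerDl sumr_ge0.
have term o1 : 0 <= P o1 * - ln (a o1 / b o1).
  apply: mulr_ge0 => //; rewrite oppr_ge0 ln_le0 //.
  have [->|b0] := eqVneq (b o1) 0; first by rewrite invr0 mulr0.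
  by rewrite ler_pdivrMr ?mul1r // lt_neqAle eq_sym b0 /= (le_trans (a0 o1)).
move: H; rewrite /condH => /eqP; rewrite psumr_eq0 //= => /allP /(_ o).
rewrite mem_index_enum => /(_ isT); rewrite mulf_eq0 gt_eqF //= oppr_eq0.
have apos : 0 < a o.
  rewrite /a /evprob (bigD1 o) ?eqxx //= ltr_wpDr //; exact: sumr_ge0.
rewrite ln_eq0; last by rewrite divr_gt0 // (lt_le_trans apos).
move=> /eqP h.
have bnz : b o != 0 by rewrite gt_eqF // (lt_le_trans apos).
have eab : a o = b o by rewrite -[a o](divfK bnz) h mul1r.
apply/eqP/negPn/negP => nX.
have hb : b o = a o + \sum_(i | (Y i == Y o) && (X i != X o)) P i.
  rewrite /b /a /evprob (bigID (fun i => X i == X o)) /=; congr (_ + _).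
  by apply: eq_bigl => i; rewrite andbC.
move: hb; rewrite -eab -{1}[a o]addr0 => /addrI /esym /eqP.
rewrite psumr_eq0; last by move=> i _; apply: P0.
move/allP/(_ o'); rewrite mem_index_enum => /(_ isT).
rewrite -eY eqxx /= eq_sym (negbTE nX) /= gt_eqF //.
Qed.
Local Open Scope ring_scope.

Lemma per_msg (K N M : nat) (s : pid_scheme K N) (j : 'I_K) :
  pid_valid M s -> (len s <= \sum_(n | j \in store s n) dl s n)%N.
Proof.
case=> P0 [P1 [Sc [Dep [Cor Priv]]]].
have [z0 Pz0] : exists z, 0 < PZ s z.
  case: (pickP (fun z => 0 < PZ s z)) => [z Hz|H0]; first by exists z; exact: Hz.
  have : \sum_z PZ s z = 0.
    apply: big1 => z _; apply/eqP; rewrite eq_le P0 andbT.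
    by rewrite leNgt H0.
  by rewrite P1 => /eqP; rewrite oner_eq0.
pose w0 : msgs s := [ffun => 0].
pose wx (x : 'rV['F_(fp s)]_(len s)) : msgs s :=
  [ffun i => if i == j then x else w0 i].
pose ss x := [seq (if j \in store s n then val (answer s j n (wx x) z0)
                   else [::]) | n <- enum 'I_N].
set D := (\sum_(n | j \in store s n) dl s n)%N.
have shss x : shape (ss x) = [seq (if j \in store s n then dl s n else 0%N)
                                | n <- enum 'I_N].
  rewrite /shape -map_comp. apply/eq_in_map => n _ /=.
  by case: ifP => //; rewrite size_tuple.
have szf x : size (flatten (ss x)) = D.
  rewrite size_flatten shss sumnE big_map big_enum /= /D.
  by rewrite [RHS]big_mkcond.
pose F x : D.-tuple 'F_(fp s) := insubd (nseq_tuple D 0) (flatten (ss x)).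
have Finj : injective F.
  move=> x y /(congr1 val); rewrite !insubdK ?unfold_in /= ?szf ?eqxx // => ef.
  have ess : ss x = ss y by rewrite -(flattenK (ss x)) -(flattenK (ss y)) ef !shss.
  have eA : Ak j ((wx x, z0) : Omega s) = Ak j ((wx y, z0) : Omega s).
    rewrite /Ak /=; apply/eq_in_map => n _.
    case jS: (j \in store s n).
      move: ess => /eq_in_map /(_ n); rewrite mem_enum jS => /(_ isT).
      by [].
    congr val; apply: Dep => i iS; rewrite !ffunE.
    by case: eqP => // eij; move: iS; rewrite eij jS.
  have pos y' : 0 < prob ((wx y', z0) : Omega s).
    by rewrite /prob divr_gt0 // ltr0n; apply/card_gt0P; exists w0.
  have Pp (o : Omega s) : 0 <= prob o by rewrite /prob divr_ge0.
  have := @condH0_det _ _ _ _ _ _ Pp (Cor j) _ _ (pos x) (pos y) eA.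
  by rewrite /Wk /= !ffunE eqxx.
have := leq_card F Finj.
rewrite card_mx card_tuple card_Fp ?fp_prime // mul1n.
by rewrite leq_exp2l // prime_gt1 // fp_prime.
Qed.

Lemma converse_nat (K N M : nat) (s : pid_scheme K N) :
  pid_valid M s -> (K * len s <= M * \sum_n dl s n)%N.
Proof.
move=> V; have Sc : forall n, #|store s n| = M by case: V => _ [_ [Sc _]].
rewrite -[K in (K * _)%N]card_ord -sum_nat_const.
apply: (@leq_trans (\sum_(j : 'I_K) \sum_(n | j \in store s n) dl s n)).
  by apply: leq_sum => j _; apply: per_msg V.
rewrite (eq_bigr (fun j => \sum_n if j \in store s n then dl s n else 0%N)); last by move=> j _; rewrite big_mkcond.
rewrite exchange_big /= big_distrr /=; apply: eq_leq; apply: eq_bigr => n _.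
by rewrite -big_mkcond /= sum_nat_const Sc mulnC.
Qed.
Local Open Scope ring_scope.

Section Ach.
Variables (K N M : nat).
Let m := (K %/ M)%N.

Definition zok (z : {ffun 'I_N -> 'F_2}) : bool := \sum_(n < N | (n < m)%N) z n == 0.
Definition ZTa := {z : {ffun 'I_N -> 'F_2} | zok z}.
Definition PZa (z : ZTa) : Rdefinitions.R := #|{: ZTa}|%:R^-1.
Definition dla (n : 'I_N) : nat := (n < m)%N.
Definition storea (n : 'I_N) : {set 'I_K} :=
  [set k : 'I_K | (k %/ M)%N == (if (n < m)%N then nat_of_ord n else 0%N)].
Definition answera (k : 'I_K) (n : 'I_N) (w : {ffun 'I_K -> 'rV['F_2]_1}) (z : ZTa)
  : (dla n).-tuple 'F_2 :=
  nseq_tuple (dla n) (val z n + ((k %/ M)%N == n)%:R * w k ord0 ord0).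

Definition scheme_a : pid_scheme K N :=
  @PidScheme K N 2 isT 1 ZTa PZa dla storea answera.
End Ach.
Set Implicit Arguments. Unset Strict Implicit. Unset Printing Implicit Defensive.
Local Open Scope ring_scope.

Lemma sum_ind (R : ringType) N m (g : nat) (a : R) : (g < m)%N -> (m <= N)%N ->
  \sum_(n < N | (n < m)%N) ((g == n)%:R * a) = a.
Proof.
move=> gm mN; have gN : (g < N)%N by apply: leq_trans mN.
rewrite (bigD1 (Ordinal gN)) //= eqxx mul1r big1 ?addr0 // => n /andP[_ ne].
suff -> : (g == n) = false by rewrite mul0r.
apply/negbTE; apply: contra ne => /eqP e; apply/eqP/val_inj => /=.
by rewrite e.
Qed.

Lemma gk_lt K M (k : 'I_K) : (0 < M)%N -> (M %| K)%N -> (k %/ M < K %/ M)%N.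
Proof. by move=> M0 MK; rewrite ltn_divLR // divnK. Qed.

Definition zshift K N M (k k' : 'I_K) (a : 'F_2) (z : ZTa K N M) : ZTa K N M :=
  insubd z [ffun n : 'I_N => val z n + ((k %/ M)%N == n)%:R * a
                                    - ((k' %/ M)%N == n)%:R * a].

Lemma zshiftE K N M k k' a z : (0 < M)%N -> (M %| K)%N -> (K %/ M <= N)%N ->
  val (@zshift K N M k k' a z) =
  [ffun n : 'I_N => val z n + ((k %/ M)%N == n)%:R * a
                                    - ((k' %/ M)%N == n)%:R * a].
Proof.
move=> M0 MK mN; rewrite insubdK // unfold_in /zok.
under eq_bigr do rewrite ffunE.
rewrite big_split /= big_split /= sumrN !sum_ind ?gk_lt //.
by move: (valP z); rewrite /zok => /eqP ->; rewrite add0r subrr.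
Qed.

Definition phi K N M (k k' : 'I_K)
  (o : {ffun 'I_K -> 'rV['F_2]_1} * ZTa K N M) :
  {ffun 'I_K -> 'rV['F_2]_1} * ZTa K N M :=
  ([ffun i => if i == k' then o.1 k else if i == k then o.1 k' else o.1 i],
   zshift k k' (o.1 k ord0 ord0) o.2).

Lemma phiK K N M k k' : (0 < M)%N -> (M %| K)%N -> (K %/ M <= N)%N ->
  cancel (@phi K N M k' k) (@phi K N M k k').
Proof.
move=> M0 MK mN [w z].
have e1 : [ffun i => if i == k then w k' else if i == k' then w k else w i] k = w k'.
  by rewrite ffunE eqxx.
rewrite /phi /= e1; congr pair.
  apply/ffunP => i; rewrite !ffunE eqxx.
  case: (eqVneq i k') => [->|ik'] //.
  case: (eqVneq i k) => [->|ik] //; by case: (eqVneq k' k) => [->|].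
apply: val_inj; rewrite !zshiftE //; apply/ffunP => n; rewrite !ffunE.
by rewrite subrK addrK.
Qed.

From mathcomp Require Import zify.

Lemma card_grp K M j : (0 < M)%N -> (M %| K)%N -> (j < K %/ M)%N ->
  #|[set k : 'I_K | (k %/ M)%N == j]| = M.
Proof.
move=> M0 MK jm.
have KE : K = (K %/ M * M)%N by rewrite divnK.
have lt (i : 'I_M) : (j * M + i < K)%N.
  have := ltn_ord i; rewrite {1}KE.
  have : (j.+1 * M <= K %/ M * M)%N by rewrite leq_mul2r jm orbT.
  lia.
pose f i := Ordinal (lt i).
have -> : [set k : 'I_K | (k %/ M)%N == j] = f @: [set: 'I_M].
  apply/setP => k; rewrite inE; apply/eqP/imsetP.
    move=> e; exists (Ordinal (ltn_pmod k M0)) => //.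
    by apply: val_inj; rewrite /= -e; exact: divn_eq.
  by case=> i _ ->; rewrite /= divnMDl // divn_small // addn0.
rewrite card_imset ?cardsT ?card_ord // => a b /(congr1 val) /= /addnI e.
exact: val_inj.
Qed.

Lemma valid_a K N M : (0 < M)%N -> (M <= K)%N -> (M %| K)%N -> (K %/ M <= N)%N ->
  pid_valid M (scheme_a K N M).
Proof.
move=> M0 MK' MK mN.
have m0 : (0 < K %/ M)%N by rewrite divn_gt0.
have z0ok : zok K N M [ffun => 0].
  by rewrite /zok big1 // => n _; rewrite ffunE.
pose z0 : ZTa K N M := Sub _ z0ok.
have cZ : (0 < #|{: ZTa K N M}|)%N by apply/card_gt0P; exists z0.
split; first by move=> z; rewrite /= /PZa invr_ge0 ler0n.
split.
  rewrite /= /PZa sumr_const (_ : #|xpredT| = #|{: ZTa K N M}|) // -[_ *+ #|{: _}|]mulr_natr mulVf // pnatr_eq0 -lt0n; exact: cZ.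

split.
  by move=> n; rewrite /= /storea card_grp //; case: ifP.
split.
  move=> k n w w' z H /=; rewrite /answera.
  case: (eqVneq (k %/ M)%N n) => [e|ne]; last by rewrite !mul0r.
  rewrite H //; rewrite /storea inE -e gk_lt //.
split.
  move=> k.
  apply: (@condH_det _ _ _ _ _ _
     (fun a : seq (seq 'F_2) => const_mx (\sum_(t <- a) head 0 t) : 'rV['F_2]_1)).
  move=> [w z]; apply/matrixP => i j; rewrite !ord1 mxE /Ak /= big_map big_enum /=.
  have hd (n : 'I_N) : head 0 (val (answer (scheme_a K N M) k n w z)) =
     if (n < K %/ M)%N then val z n + ((k %/ M)%N == n)%:R * w k ord0 ord0 else 0.
    rewrite /answera /= (_ : dla K N M n = (n < K %/ M)%N) //; by case: (n < K %/ M)%N.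
  under eq_bigr do rewrite hd.
  rewrite -big_mkcond /= big_split /= sum_ind ?gk_lt //.
  by move: (valP z); rewrite /zok => /eqP ->; rewrite add0r.
move=> k k' a x.
rewrite /evprob (reindex_inj (can_inj (phiK k k' M0 MK mN))) /=.
apply: eq_big => // -[w z].
have eA : Ak k (phi k' k (w, z) : Omega (scheme_a K N M)) = Ak k' ((w, z) : Omega (scheme_a K N M)).
  rewrite /Ak; apply/eq_in_map => n _ /=; rewrite /answera /=.
  by rewrite zshiftE // !ffunE eqxx subrK.
have eW : Wk k (phi k' k (w, z) : Omega (scheme_a K N M)) = Wk k' ((w, z) : Omega (scheme_a K N M)).
  by rewrite /Wk /= ffunE eqxx.
by rewrite eA eW.
Qed.
Set Implicit Arguments. Unset Strict Implicit. Unset Printing Implicit Defensive.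
Local Open Scope ring_scope.

Lemma sum_lt N m : (m <= N)%N -> (\sum_(n < N) ((n < m)%N : nat))%N = m.
Proof.
move=> mN.
rewrite -(big_mkord xpredT (fun i => nat_of_bool (i < m)%N)).
rewrite (big_cat_nat (leq0n m) mN) /=.
rewrite (@eq_big_nat _ _ _ 0 m _ (fun=> 1%N)); last by move=> i /andP[_ ->].
rewrite sum_nat_const_nat muln1 subn0 big1_seq ?addn0 // => i.
by rewrite mem_index_iota /= => /andP[h _]; rewrite ltnNge h.
Qed.

Lemma rate_le K N M (s : pid_scheme K N) : (0 < K)%N ->
  pid_valid M s -> rate s <= M%:R / K%:R.
Proof.
move=> K0 V; have := @converse_nat K N M s V; rewrite /rate.
set L := len s; set D := (\sum_n dl s n)%N => h.
have [D0|Dp] := posnP D.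
  move: h; rewrite D0 muln0 leqn0 muln_eq0 (gtn_eqF K0) /= => /eqP ->.
  by rewrite mul0r divr_ge0.
rewrite ler_pdivrMr ?ltr0n // mulrAC ler_pdivlMr ?ltr0n // -!natrM ler_nat.
by rewrite mulnC.
Qed.

Theorem corollary1 (K N M : nat) :
  (1 <= M)%N -> (M <= K)%N -> (M %| K)%N -> (K %/ M <= N)%N ->
  capacity K N M = (M%:R / K%:R : Rdefinitions.R).
Proof.
move=> M0 MK MdK mN.
have K0 : (0 < K)%N by apply: leq_trans MK.
have ub : forall r, [set r : Rdefinitions.R | achievable K N M r]%classic r ->
    r <= M%:R / K%:R.
  by move=> r [s [V le]]; apply: le_trans le (rate_le K0 V).
have inS : [set r : Rdefinitions.R | achievable K N M r]%classic (M%:R / K%:R).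
  exists (scheme_a K N M); split; first exact: valid_a.
  rewrite /rate /= sum_lt // div1r.
  rewrite -[in K%:R](divnK MdK) natrM invfM mulrCA mulfV ?mulr1 //.
  by rewrite pnatr_eq0 -lt0n.
rewrite /capacity; apply/eqP; rewrite eq_le; apply/andP; split.
  by apply: ge_sup; [exists (M%:R / K%:R) | move=> r; apply: ub].
by apply: ub_le_sup => //; exists (M%:R / K%:R) => r; apply: ub.
Qed.
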